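(* There exist absolute constants $C_1,C_2>0$ such that for every compact set $\Omega\subset\mathbb{R}^d$ and every $N$-dimensional linear subspace $X_N$ of the space of real-valued continuous functions on $\Omega$, there exists a set of $m\le C_1N$ points $\xi^1,\dots,\xi^m\in\Omega$ such that for every $f\in X_N$ $$ \|f\|_\infty\le C_2\sqrt{N}\max_{1\le j\le m}|f(\xi^j)|, $$ where $\|f\|_\infty=\max_{\mathbf x\in\Omega}|f(\mathbf x)|$. *)

(* Defs.v *)
From HB Require Import structures.
From mathcomp Require Import all_boot all_order all_algebra.
From mathcomp Require Import all_classical all_reals all_analysis.
From mathcomp Require Import Rstruct Rstruct_topology.
From Stdlib Require Import Rdefinitions.
Set Implicit Arguments. Unset Strict Implicit. Unset Printing Implicit Defensive.
Import Order.TTheory GRing.Theory Num.Theory.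
Local Open Scope ring_scope.
Local Open Scope classical_set_scope.

Definition lin_comb (d N : nat) (phi : 'I_N -> 'rV[R]_d -> R) (c : 'I_N -> R)
  : 'rV[R]_d -> R := fun x => \sum_(i < N) c i * phi i x.

(* phi_1..phi_N are linearly independent as functions on Omega
   (so their span, restricted to Omega, is N-dimensional). *)
Definition lin_indep_on (d N : nat) (Omega : set 'rV[R]_d)
  (phi : 'I_N -> 'rV[R]_d -> R) : Prop :=
  forall c : 'I_N -> R, (forall x, Omega x -> lin_comb phi c x = 0) ->
    forall i, c i = 0.

Definition max_on_points (d m : nat) (f : 'rV[R]_d -> R) (xi : 'I_m -> 'rV[R]_d)
  : R := \big[Num.max/0]_(j < m) `|f (xi j)|.

(* Main.v *)
Require Import Defs.
From HB Require Import structures.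
From mathcomp Require Import all_boot all_order all_algebra.
From mathcomp Require Import all_classical all_reals all_analysis.
From mathcomp Require Import Rstruct Rstruct_topology.
From Stdlib Require Import Rdefinitions.
From mathcomp Require Import all_fingroup.
From mathcomp Require Import ring lra.
Import Order.TTheory GRing.Theory Num.Theory.
Import numFieldNormedType.Exports.
Local Open Scope ring_scope.
Local Open Scope classical_set_scope.
Set Implicit Arguments. Unset Strict Implicit. Unset Printing Implicit Defensive.
Section Alg.
Variable R : realFieldType.
Lemma det2 (A : 'M[R]_2) : \det A = A 0 0 * A 1 1 - A 0 1 * A 1 0.
Proof.
rewrite (expand_det_row _ 0) !big_ord_recl big_ord0 /cofactor !det_mx11 !mxE /=.
have E : forall (i : 'I_2) (j : 'I_(2.-1)), lift i j = if i == 0 then 1 else 0.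
  by move=> [[|[|k]] Hi] [[|j] Hj] //; apply/val_inj.
have e0 : (ord0 : 'I_2) = 0 by apply/val_inj.
rewrite !E /= ?e0 ?E /= ?expr0 expr1 /=; ring.
Qed.
Lemma sylvester n k (A : 'M[R]_(n,k)) (B : 'M[R]_(k,n)) :
  \det (1%:M + A *m B) = \det (1%:M + B *m A).
Proof.
have h1 : block_mx 1%:M A (- B) 1%:M *m block_mx 1%:M (- A) 0 1%:M
   = block_mx 1%:M 0 (- B) (1%:M + B *m A).
  by rewrite mulmx_block !mulmx1 !mul1mx !mulmx0 ?addr0 ?mulNmx ?mulmxN ?opprK ?addNr ?subrr; rewrite ?[_ + 1%:M]addrC.
have h2 : block_mx 1%:M (- A) 0 1%:M *m block_mx 1%:M A (- B) 1%:M
   = block_mx (1%:M + A *m B) 0 (- B) 1%:M.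
  by rewrite mulmx_block !mulmx1 !mul1mx !mul0mx ?add0r ?mulNmx ?mulmxN ?opprK ?addNr ?subrr; rewrite ?[_ + 1%:M]addrC.
have := congr1 determinant h1; have := congr1 determinant h2.
rewrite !det_mulmx !det_lblock !det_ublock !det1 !mul1r !mulr1 => -> ->; by [].
Qed.
Lemma det2' (A : 'M[R]_(1+1)) : \det A =
  A (lshift 1 0) (lshift 1 0) * A (rshift 1 0) (rshift 1 0)
  - A (lshift 1 0) (rshift 1 0) * A (rshift 1 0) (lshift 1 0).
Proof.
rewrite det2.
have -> : (lshift 1 0 : 'I_(1+1)) = 0 by apply/val_inj.
have -> : (rshift 1 0 : 'I_(1+1)) = 1 by apply/val_inj.
by [].
Qed.

Definition Gram m N (w : 'I_m -> 'rV[R]_N) : 'M[R]_N := \sum_j (w j)^T *m w j.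
Definition qf N (M : 'M[R]_N) (u z : 'rV[R]_N) : R := (u *m M *m z^T) 0 0.

Lemma mx11_mul (P Q : 'M[R]_1) : (P *m Q) 0 0 = P 0 0 * Q 0 0.
Proof. by rewrite mxE big_ord1. Qed.

Section Gram.
Variables (m N : nat) (w : 'I_m -> 'rV[R]_N).
Hypothesis Gu : Gram w \in unitmx.
Let G := Gram w.
Let Gi := invmx G.

Lemma Gram_tr : G^T = G.
Proof.
by rewrite /G /Gram raddf_sum /=; apply: eq_bigr => j _; rewrite trmx_mul trmxK.
Qed.

Lemma Gi_tr : Gi^T = Gi.
Proof. by rewrite /Gi trmx_inv Gram_tr. Qed.

Lemma qfC u z : qf Gi u z = qf Gi z u.
Proof.
rewrite /qf -[in LHS](trmxK (u *m Gi *m z^T)) [in LHS]mxE.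
by rewrite !trmx_mul trmxK Gi_tr mulmxA.
Qed.

Lemma GiG : Gi *m G = 1%:M.
Proof. exact: mulVmx. Qed.
Lemma GGi : G *m Gi = 1%:M.
Proof. exact: mulmxV. Qed.

Lemma qf_trace : \sum_k qf Gi (w k) (w k) = N%:R.
Proof.
have -> : \sum_k qf Gi (w k) (w k) = \tr (Gi *m G).
  rewrite /G /Gram mulmx_sumr raddf_sum /=; apply: eq_bigr => k _.
  by rewrite /qf mulmxA mxtrace_mulC mulmxA /mxtrace big_ord1.
by rewrite GiG mxtrace1.
Qed.

Lemma qf_sq x : \sum_k (qf Gi x (w k)) ^+ 2 = qf Gi x x.
Proof.
have -> : \sum_k (qf Gi x (w k)) ^+ 2 = (x *m Gi *m G *m Gi *m x^T) 0 0.
  rewrite /G /Gram mulmx_sumr mulmx_suml mulmx_suml summxE; apply: eq_bigr => k _.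
  by rewrite expr2 {2}qfC /qf -mx11_mul !mulmxA.
by rewrite -(mulmxA x Gi G) GiG mulmx1.
Qed.

Lemma qf_repr x (c : 'cV[R]_N) :
  (x *m c) 0 0 = \sum_j qf Gi x (w j) * (w j *m c) 0 0.
Proof.
rewrite -{1}(mulmx1 x) -GiG mulmxA /G /Gram mulmx_sumr mulmx_suml summxE.
by apply: eq_bigr => j _; rewrite /qf -mx11_mul !mulmxA.
Qed.

Lemma qf_det k x :
  \det (G - (w k)^T *m w k + x^T *m x) =
  \det G * ((1 + qf Gi x x) * (1 - qf Gi (w k) (w k)) + (qf Gi x (w k)) ^+ 2).
Proof.
pose U := row_mx x^T (w k)^T. pose W := col_mx x (- w k).
have -> : G - (w k)^T *m w k + x^T *m x = G *m (1%:M + (Gi *m U) *m W).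
  rewrite mulmxDr mulmx1 !mulmxA GGi mul1mx /U /W mul_row_col mulmxN.
  by rewrite -addrA (addrC (- _)).
rewrite det_mulmx sylvester; congr (_ * _).
rewrite mulmxA /W /U mul_col_mx mul_col_row [1%:M]scalar_mx_block add_block_mx det2'.
rewrite !block_mxEul !block_mxEur !block_mxEdl !block_mxEdr !mulNmx.
rewrite /qf !mxE /=.
have := qfC (w k) x; rewrite /qf !mxE => ->; ring.
Qed.
End Gram.
Lemma det_le n (A : 'M[R]_n) E : 0 <= E -> (forall i j, `|A i j| <= E) ->
  \det A <= \sum_(s : 'S_n) E ^+ n.
Proof.
move=> E0 HA; apply: (le_trans (ler_norm _)).
rewrite /determinant; apply: (le_trans (ler_norm_sum _ _ _)).
apply: ler_sum => s _; rewrite normrM normrX normrN1 expr1n mul1r normr_prod.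
rewrite (_ : E ^+ n = \prod_(i < n) E); last by rewrite prodr_const card_ord.
apply: ler_prod => i _.
by rewrite normr_ge0 HA.
Qed.

Lemma Gram_entry m N (w : 'I_m -> 'rV[R]_N) i l :
  Gram w i l = \sum_j w j 0 i * w j 0 l.
Proof.
rewrite /Gram summxE; apply: eq_bigr => j _.
by rewrite mxE big_ord1 !mxE.
Qed.

Lemma Gram_swap m N (w : 'I_m -> 'rV[R]_N) k y :
  Gram (fun j => if j == k then y else w j) = Gram w - (w k)^T *m w k + y^T *m y.
Proof.
rewrite /Gram (bigD1 k) //= eqxx [in RHS](bigD1 k) //=.
rewrite (eq_bigr (fun j => (w j)^T *m w j)); last by move=> j /negPf ->.
by rewrite addrC (addrC ((w k)^T *m w k)) addrK.
Qed.

Lemma Gram_rows m N (A : 'M[R]_(m,N)) : Gram (fun j => row j A) = A^T *m A.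
Proof.
apply/matrixP => i l; rewrite Gram_entry mxE; apply: eq_bigr => j _.
by rewrite !mxE.
Qed.

Lemma two_abs (s c : R) : 0 < s -> 2 * `|c| <= s * c ^+ 2 + s^-1.
Proof.
move=> s0; rewrite -real_normK ?num_real //.
set t := `|c|; have t0 : 0 <= t by rewrite normr_ge0.
set u := s^-1; have su : s * u = 1 by rewrite /u mulfV // gt_eqF.
have u0 : 0 < u by rewrite invr_gt0.
have h := mulr_ge0 (sqr_ge0 (s * t - 1)) (ltW u0).
have e : (s * t - 1) ^+ 2 * u = s * t ^+ 2 * (s * u) - 2 * t * (s * u) + u by ring.
rewrite su !mulr1 in e.
by move: h; rewrite e; lra.
Qed.
Lemma span_basis d N (Omega : 'rV[R]_d -> Prop) (v : 'rV[R]_d -> 'rV[R]_N) :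
  (forall u : 'rV[R]_N, (forall x, Omega x -> v x *m u^T = 0) -> u = 0) ->
  forall r, leq r N -> exists xi : 'I_r -> 'rV[R]_d,
    (forall j, Omega (xi j)) /\ row_free (\matrix_(j, i) v (xi j) 0 i).
Proof.
move=> hind; elim=> [|r IH] hr.
  exists (fun=> 0); split; first by case.
  by rewrite /row_free -leqn0 rank_leq_row.
have [xi [Oxi fV]] := IH (ltnW hr).
set V := \matrix_(j, i) v (xi j) 0 i in fV.
have rV : \rank V = r by apply/eqP.
set K := kermx V^T.
have rK : \rank K = subn N r by rewrite mxrank_ker mxrank_tr rV.
have [i nzi] : exists i, row i K != 0.
  apply: contrapT => hn.
  have K0 : K = 0.
    apply/row_matrixP => i; rewrite row0; apply: contrapT => hi.
    by apply: hn; exists i; apply/eqP.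
  by move: rK; rewrite K0 mxrank0 => /esym/eqP; rewrite subn_eq0 leqNgt hr.
set u := row i K.
have uV : u *m V^T = 0 by apply/sub_kermxP; rewrite row_sub.
have [x [Ox vxu]] : exists x, Omega x /\ v x *m u^T != 0.
  apply: contrapT => hn; move/eqP: nzi; apply; apply: hind => x Ox.
  apply/eqP; apply: contrapT => h; apply: hn; exists x; split => //; exact/negP.
have nsub : ~~ (v x <= V)%MS.
  apply/negP => /submxP [w ew]; move: vxu; rewrite ew -mulmxA.
  by rewrite -(trmxK V) -trmx_mul uV trmx0 mulmx0 eqxx.
pose xi' : 'I_(1 + r) -> 'rV[R]_d :=
  fun j => match @fintype.split 1 r j with inl _ => x | inr j' => xi j' end.
exists xi'; split.
  by move=> j; rewrite /xi'; case: (@fintype.split 1 r j).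
have -> : \matrix_(j, i) v (xi' j) 0 i = col_mx (v x) V.
  apply/matrixP => j l; rewrite !mxE /xi'; case: (@fintype.split 1 r j) => a; rewrite ?mxE //.
  by rewrite (ord1 a).
set C := col_mx (v x) V.
have := submx_refl C; rewrite {1}/C col_mx_sub => /andP [sxC sVC].
have hlt : leq (\rank V).+1 (\rank C).
  rewrite (ltn_leqif (mxrank_leqif_sup sVC)); apply/negP => sCV.
  by move/negP: nsub; apply; apply: submx_trans sxC sCV.
rewrite /row_free eqn_leq rank_leq_row /=.
by move: hlt; rewrite rV.
Qed.
End Alg.
Lemma phi_bounded d (Omega : set 'rV[R]_d) N (phi : 'I_N -> 'rV[R]_d -> R) :
  compact Omega -> (forall i, {within Omega, continuous (phi i)}) ->
  exists B : R, 0 <= B /\ forall i y, Omega y -> `|phi i y| <= B.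
Proof.
move=> cO cphi.
have /choice [M HM] : forall i, exists M : R, forall y, Omega y -> `|phi i y| <= M.
  move=> i; have := @compact_bounded R R^o _ (continuous_compact (cphi i) cO).
  move=> [M0 [_ HM0]]; exists (M0 + 1) => y Oy.
  apply: (HM0 (M0 + 1)); first by rewrite ltrDl ltr01.
  by exists y.
exists (\sum_i `|M i|); split; first by apply: sumr_ge0 => i _.
move=> i y Oy; apply: (le_trans (HM i y Oy)); apply: (le_trans (ler_norm _)).
rewrite (bigD1 i) //= lerDl; by apply: sumr_ge0 => j _.
Qed.

Theorem corollary2p1 :
  exists C1 C2 : R, 0 < C1 /\ 0 < C2 /\
  forall (d : nat) (Omega : set 'rV[R]_d), compact Omega ->
  forall (N : nat) (phi : 'I_N -> 'rV[R]_d -> R),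
    (forall i, {within Omega, continuous (phi i)}) ->
    lin_indep_on Omega phi ->
    exists (m : nat) (xi : 'I_m -> 'rV[R]_d),
      (forall j, Omega (xi j)) /\
      (m%:R <= C1 * N%:R) /\
      forall c : 'I_N -> R, forall x, Omega x ->
        `|lin_comb phi c x| <= C2 * Num.sqrt (N%:R) * max_on_points (lin_comb phi c) xi.
Proof.
exists 2, 3; split; first lra; split; first lra.
move=> d Omega cO N phi cphi hind.
have [N0|Npos] := posnP N.
  subst N; exists 0%N, (fun=> 0); split; first by case.
  split; first by rewrite mulr0.
  by move=> c x Ox; rewrite /lin_comb big_ord0 normr0 sqrtr0 mulr0 mul0r.
pose v (x : 'rV[R]_d) : 'rV[R]_N := \row_i phi i x.
have lcE : forall c x, lin_comb phi c x = (v x *m (\col_i c i)) 0 0.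
  move=> c x; rewrite /lin_comb mxE; apply: eq_bigr => i _; rewrite !mxE mulrC.
  by [].
pose D (xi : 'I_(N + N) -> 'rV[R]_d) := \det (Gram (fun j => v (xi j))).
have [B [B0 HB]] := phi_bounded cO cphi.
pose Bd := \sum_(s : 'S_N) ((N + N)%:R * (B * B)) ^+ N.
have HD : forall xi, (forall j, Omega (xi j)) -> D xi <= Bd.
  move=> xi Oxi; apply: det_le; first by rewrite mulr_ge0 // mulr_ge0.
  move=> i l; rewrite Gram_entry; apply: (le_trans (ler_norm_sum _ _ _)).
  apply: (@le_trans _ _ (\sum_(j < N + N) (B * B))).
    apply: ler_sum => j _; rewrite !mxE normrM.
    by apply: ler_pM; rewrite ?normr_ge0 //; apply: HB.
  by rewrite sumr_const card_ord mulr_natl.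
have hspan : forall u : 'rV[R]_N, (forall x, Omega x -> v x *m u^T = 0) -> u = 0.
  move=> u hu; apply/rowP => i; rewrite mxE.
  apply: (hind (fun i => u 0 i)) => x Ox.
  rewrite lcE (_ : \col_i u 0 i = u^T); first by rewrite hu ?mxE.
  by apply/colP => l; rewrite !mxE.
have [xi0 [Oxi0 fV0]] := span_basis hspan (leqnn N).
set V0 := \matrix_(j, i) v (xi0 j) 0 i in fV0.
have dV0 : \det V0 != 0.
  by move: fV0; rewrite row_free_unit unitmxE unitfE.
pose xi1 (j : 'I_(N + N)) : 'rV[R]_d :=
  xi0 (match @fintype.split N N j with inl a => a | inr a => a end).
have Oxi1 : forall j, Omega (xi1 j) by move=> j; apply: Oxi0.
have D1pos : 0 < D xi1.
  rewrite /D /Gram big_split_ord /=.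
  have hl : forall i, @fintype.split N N (lshift N i) = inl i := fun i => unsplitK (inl i).
  have hr : forall i, @fintype.split N N (rshift N i) = inr i := fun i => unsplitK (inr i).
  rewrite /xi1.
  under eq_bigr do rewrite hl.
  under [X in _ + X]eq_bigr do rewrite hr.
  have -> : \sum_(i < N) (v (xi0 i))^T *m v (xi0 i) = V0^T *m V0.
    rewrite -Gram_rows /Gram; apply: eq_bigr => i _.
    by have -> : row i V0 = v (xi0 i) by apply/rowP => l; rewrite !mxE.
  rewrite -mulr2n -scaler_nat detZ det_mulmx det_tr.
  apply: mulr_gt0; first by rewrite exprn_gt0.
  by rewrite -expr2 exprn_even_gt0.
pose swap (xi : 'I_(N + N) -> 'rV[R]_d) k x := fun j => if j == k then x else xi j.
have good : exists xi, (forall j, Omega (xi j)) /\ 0 < D xi /\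
    forall k x, Omega x -> D (swap xi k x) <= 2 * D xi.
  apply: contrapT => ng.
  have step : forall xi, (forall j, Omega (xi j)) -> 0 < D xi ->
      exists xi', (forall j, Omega (xi' j)) /\ 2 * D xi < D xi'.
    move=> xi Oxi Dpos; apply: contrapT => hn; apply: ng; exists xi; do 2 split => //.
    move=> k x Ox; rewrite leNgt; apply/negP => hlt; apply: hn.
    exists (swap xi k x); split => //.
    by move=> j; rewrite /swap; case: (j == k).
  have grow : forall n, exists xi, (forall j, Omega (xi j)) /\ 2 ^+ n * D xi1 <= D xi.
    elim => [|n [xi [Oxi hxi]]]; first by exists xi1; rewrite expr0 mul1r.
    have Dpos : 0 < D xi by apply: lt_le_trans hxi; rewrite mulr_gt0 // exprn_gt0.
    have [xi' [Oxi' h']] := step xi Oxi Dpos.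
    exists xi'; split => //; rewrite exprS -mulrA; apply/ltW/(le_lt_trans _ h').
    by rewrite ler_pM2l.
  pose n := Num.Def.archi_bound `|Bd / D xi1|.
  have [xi [Oxi h]] := grow n.
  have := HD xi Oxi; apply/negP; rewrite -ltNge; apply: lt_le_trans h.
  have h1 : Bd / D xi1 < n%:R.
    apply: le_lt_trans (ler_norm _) _; exact: archi_boundP.
  have h2 : (n%:R : R) <= 2 ^+ n.
    have := @ltn_expl 2 n isT; rewrite -(ltr_nat R) natrX => /ltW.
    by [].
  by rewrite -ltr_pdivrMr //; apply: lt_le_trans h1 h2.
have [xi [Oxi [Dpos Hopt]]] := good.
pose w := fun j => v (xi j).
have Gu : Gram w \in unitmx by rewrite unitmxE unitfE gt_eqF.
set Gi := invmx (Gram w).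
exists (N + N)%nat, xi; split => //; split.
  by rewrite natrD; lra.
move=> c x Ox.
set a := qf Gi (v x) (v x).
have a0 : 0 <= a by rewrite /a -(qf_sq Gu) sumr_ge0 // => k _; rewrite sqr_ge0.
have Tk : forall k, (1 + a) * (1 - qf Gi (w k) (w k)) + qf Gi (v x) (w k) ^+ 2 <= 2.
  move=> k; have := Hopt k x Ox; rewrite /D.
  have -> : (fun j => v (swap xi k x j)) = (fun j => if j == k then v x else w j).
    by apply: funext => j; rewrite /swap; case: (j == k).
  rewrite Gram_swap qf_det // -/(D xi) => h.
  by rewrite -(ler_pM2l Dpos) [X in _ <= X]mulrC; exact: h.
have hsum : (1 + a) * ((N + N)%:R - N%:R) + a <= 2 * (N + N)%:R.
  have : \sum_k ((1 + a) * (1 - qf Gi (w k) (w k)) + qf Gi (v x) (w k) ^+ 2) <= \sum_(k < N + N) (2 : R).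
    by apply: ler_sum => k _; exact: Tk.
  rewrite big_split /= -mulr_sumr sumrB qf_trace // qf_sq //.
  by rewrite !sumr_const card_ord -[2 *+ _]mulr_natr mulrC.
have Npos' : (0 : R) < N%:R by rewrite ltr0n.
have a3 : a <= 3.
  move: hsum; rewrite natrD => hsum.
  have h : a * N%:R <= 3 * N%:R by nra.
  by rewrite -(ler_pM2r Npos').
set s := Num.sqrt (N%:R : R).
have s0 : 0 < s by rewrite sqrtr_gt0.
have ss : s ^+ 2 = N%:R by rewrite sqr_sqrtr // ltW.
set M := max_on_points (lin_comb phi c) xi.
have M0 : 0 <= M by apply: bigmax_ge_id.
have hM : forall j, `|lin_comb phi c (xi j)| <= M.
  move=> j; exact: le_bigmax.
have hq : \sum_j `|qf Gi (v x) (w j)| <= 3 * s.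
  have h2 : \sum_j 2 * `|qf Gi (v x) (w j)| <= \sum_j (s * qf Gi (v x) (w j) ^+ 2 + s^-1).
    by apply: ler_sum => j _; apply: two_abs.
  rewrite -mulr_sumr big_split /= -mulr_sumr qf_sq // sumr_const card_ord in h2.
  have e : s^-1 *+ (N + N) = 2 * s.
    rewrite -[_ *+ _]mulr_natr (_ : (N + N)%:R = N%:R + N%:R :> R); last by rewrite -natrD.
    rewrite -ss; field; rewrite gt_eqF //.
  rewrite e in h2.
  have h3 : s * a <= s * 3 by rewrite ler_pM2l.
  rewrite -/a in h2; lra.
rewrite lcE (qf_repr Gu).
apply: (le_trans (ler_norm_sum _ _ _)).
apply: (@le_trans _ _ (\sum_j `|qf Gi (v x) (w j)| * M)).
  apply: ler_sum => j _; rewrite normrM; apply: ler_wpM2l; first exact: normr_ge0.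
  by rewrite -lcE; apply: hM.
by rewrite -mulr_suml ler_wpM2r.
Qed.
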